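(* Let $G=(V,E)$ be a finite simple graph of order $n$. For each collection $\mathcal{F}$ of pairwise disjoint forts of $G$, there is a feasible solution $(x,z)$ of the Fort Number Model $\mathrm{FN}(G)$ such that $|\mathcal{F}|=\sum_{i=1}^n z_i$.
   Context: $N(u)$ denotes the neighborhood of $u$. A fort of $G$ is a non-empty set $F\subseteq V$ such that no vertex $u\in V\setminus F$ has exactly one neighbor in $F$. The Fort Number Model $\mathrm{FN}(G)$ has binary variables $x_{iv}$ ($i\in\{1,\dots,n\}$, $v\in V$) and $z_i$ ($i\in\{1,\dots,n\}$), with constraints: $z_i-\sum_{u\in V}x_{iu}\leq0$ for all $i$; $x_{iu}-x_{iv}+\sum_{w\in N(u)\setminus\{v\}}x_{iw}\geq0$ for all $i$, all $v\in V$ and all $u\in N(v)$; $\sum_{i=1}^n x_{iu}\leq1$ for all $u\in V$. A feasible solution is one satisfying all constraints. *)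

(* Defs.v *)
From mathcomp Require Import all_boot all_order all_algebra.
Set Implicit Arguments. Unset Strict Implicit. Unset Printing Implicit Defensive.
Import GRing.Theory Num.Theory.

Definition simple_graph (T : finType) (e : rel T) : Prop :=
  symmetric e /\ irreflexive e.

Definition nbhd (T : finType) (e : rel T) (u : T) : {set T} := [set w | e u w].

Definition is_fort (T : finType) (e : rel T) (F : {set T}) : Prop :=
  F != set0 /\ forall u, u \notin F -> #|nbhd e u :&: F| != 1%N.

(* Feasibility for the Fort Number Model FN(G), with binary variables
   x_{i v} (i in 'I_n, standing for 1..n) and z_i, where n = #|T|.
   Constraints are read in the integers. *)
Definition fn_feasible (T : finType) (e : rel T)
    (x : 'I_#|T| -> T -> bool) (z : 'I_#|T| -> bool) : Prop :=
  [/\ (forall i : 'I_#|T|, (z i)%:Z - \sum_(u : T) (x i u)%:Z <= 0)%R,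
      (forall (i : 'I_#|T|) (v u : T), e v u ->
         (0 <= (x i u)%:Z - (x i v)%:Z
               + \sum_(w in nbhd e u :\ v) (x i w)%:Z)%R)
    & (forall u : T, (\sum_(i < #|T|) (x i u)%:Z <= 1)%R)].

(* Main.v *)
Require Import Defs.
From mathcomp Require Import all_boot all_order all_algebra.
Import GRing.Theory Num.Theory.

Lemma sumZ (I : finType) (P : pred I) (f : I -> nat) :
  (\sum_(i | P i) Posz (f i))%R = Posz (\sum_(i | P i) f i)%N.
Proof. by rewrite (big_morph Posz PoszD (erefl (Posz 0))). Qed.

Lemma card_lt (n k : nat) : k <= n -> (\sum_(i < n) nat_of_bool (i < k))%N = k.
Proof.
move=> Hk.
rewrite -(big_mkord xpredT (fun i => nat_of_bool (i < k))) (@big_cat_nat _ _ _ k) //=.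
rewrite (eq_big_nat _ _ (F2 := fun=> 1)); last by move=> i /andP[_ ->].
rewrite (eq_big_nat _ _ (F1 := fun i => nat_of_bool (i < k)) (F2 := fun=> 0)); last first.
  by move=> i /andP[H _]; rewrite ltnNge H.
by rewrite !sum_nat_const_nat muln1 muln0 addn0 subn0.
Qed.

Theorem theorem7p2 (T : finType) (e : rel T) (Hg : simple_graph e)
    (FF : {set {set T}})
    (Hforts : forall F, F \in FF -> is_fort e F)
    (Hdisj : forall F1 F2, F1 \in FF -> F2 \in FF -> F1 != F2 ->
               [disjoint F1 & F2]) :
  exists (x : 'I_#|T| -> T -> bool) (z : 'I_#|T| -> bool),
    fn_feasible e x z /\ #|FF| = (\sum_(i < #|T|) z i)%N.
Proof.
set s := enum FF.
have Hs : size s = #|FF| by rewrite cardE.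
have Hle : #|FF| <= #|T|.
  have tI : trivIset FF by apply/trivIsetP => A B HA HB; apply: Hdisj.
  move/eqP: (tI) => Hc.
  apply: leq_trans (max_card (cover FF)); rewrite -Hc.
  rewrite -sum1_card; apply: leq_sum => A HA.
  have [ne _] := Hforts A HA; by rewrite card_gt0.
have Hmem : forall i, i < size s -> nth set0 s i \in FF.
  by move=> i Hi; rewrite -mem_enum; apply: mem_nth.
exists (fun i u => (i < size s) && (u \in nth set0 s i)), (fun i => i < size s).
split; last by rewrite card_lt Hs.
split.
- move=> i; case: ltnP => Hi /=; last by rewrite subr_le0 sumr_ge0.
  have [ne _] := Hforts _ (Hmem _ Hi).
  case/set0Pn: ne => w Hw.
  rewrite subr_le0 (bigD1 w) //=. by rewrite Hw /= lerDl sumr_ge0.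
- move=> i v u Hvu.
  case Hi: (i < size s) => /=; last by rewrite subrr add0r sumr_ge0.
  case Hu: (u \in nth set0 s i).
    by rewrite addr_ge0 // ?sumr_ge0 // subr_ge0; case: (v \in _).
  case Hv: (v \in nth set0 s i); last by rewrite addr_ge0 // ?sumr_ge0.
  have [_ Hf] := Hforts _ (Hmem _ Hi).
  have Hc := Hf u (negbT Hu).
  case: (pickP [pred w | (w \in nbhd e u :&: nth set0 s i) && (w != v)]) => [w /andP[Hw Hwv]|Hn].
    move: Hw; rewrite inE => /andP[Hw1 Hw2].
    rewrite (bigD1 w) /=; last by rewrite !inE Hwv andTb; rewrite inE in Hw1.
    by rewrite Hw2 /= add0r addrA addNr add0r sumr_ge0.
  exfalso; move: Hc; rewrite eqn_leq negb_and -ltnNge card_gt0; case/orP; last first.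
    by move/set0Pn; apply; exists v; rewrite !inE Hv andbT; case: Hg => Hsym _; rewrite Hsym.
  rewrite ltnNge => /negP; apply; apply/card_le1_eqP => a b Ha Hb.
  have := Hn a; have := Hn b; rewrite /= Ha Hb /= => /negbFE/eqP -> /negbFE/eqP -> //.
- move=> u; rewrite sumZ lez_nat.
  rewrite (eq_bigr (fun i : 'I_#|T| => if (i < size s) && (u \in nth set0 s i) then 1 else 0)); last by move=> i _; case: ifP.
  rewrite -big_mkcond sum1_card; apply/card_le1_eqP => i j /andP[Hi Hui] /andP[Hj Huj].
  apply: ord_inj; apply/eqP; rewrite -(nth_uniq set0 Hj Hi (enum_uniq _)).
  apply/negPn/negP => Hne.
  have := Hdisj _ _ (Hmem _ Hj) (Hmem _ Hi) Hne.
  by move/disjointFr => H; move: (H u Huj); rewrite Hui.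
Qed.
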